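(* Let $\mathbb{F}\in\{\mathbb{R},\mathbb{C}\}$, $A\in\mathbb{F}^{m\times n}$ with $\|A\|_{\infty,col}\le1$, $b\in\mathbb{F}^m$, $\mu>0$, and let $N\ge1$ be an integer with $\beta_N>0$. Let $x'$ be a stationary point of $\mathcal{K}_{reg}$, set $z'=(I-A^*A)x'+A^*b$, and assume $$|z'_i|\notin\Big[\beta_N^2\sqrt{\mu},\ \frac{\sqrt{\mu}}{\beta_N^2}\Big]\quad\text{for all }1\le i\le n.$$ If $2\mu\,\mathrm{card}(x')+\|Ax'-b\|_2^2<\mu N+\mu$, then $x'$ is the unique global minimizer of $\mathcal{K}$ and of $\mathcal{K}_{reg}$.
   Context: $\|A\|_{\infty,col}=\max_i\|a_i\|_2$ over the columns $a_i$ of $A$. $\mathrm{card}(x)$ is the number of nonzero entries; $\beta_k=\inf\{\|Ax\|_2/\|x\|_2:x\ne0,\ \mathrm{card}(x)\le k\}$. $\mathcal{K}(x)=\mu\,\mathrm{card}(x)+\|Ax-b\|_2^2$ and $\mathcal{K}_{reg}(x)=\mathcal{Q}_2(\mu\,\mathrm{card})(x)+\|Ax-b\|_2^2$ with $\mathcal{Q}_2(\mu\,\mathrm{card})(x)=\sum_{j=1}^n\big(\mu-(\max\{\sqrt{\mu}-|x_j|,0\})^2\big)$. $A^*$ is the conjugate transpose. A stationary point of a function $g$ is a point $x$ with $0$ in the Fréchet subdifferential $\hat\partial g(x)$, i.e. the set of $v$ with $\liminf_{y\to x,y\ne x}(g(y)-g(x)-\mathrm{Re}\langle v,y-x\rangle)/\|y-x\|\ge0$.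 *)

(* Defs.v *)
From HB Require Import structures.
From mathcomp Require Import all_boot all_order all_algebra.
From mathcomp Require Import classical_sets reals.
From mathcomp.real_closed Require Import complex.
Set Implicit Arguments.
Unset Strict Implicit.
Unset Printing Implicit Defensive.
Import Order.TTheory GRing.Theory Num.Theory.
Local Open Scope ring_scope.

(* The scalar field F is either R (the reals, given as a realType) or R[i].
   It is described by:
     cj : F -> F   the conjugation (identity on R, complex conjugation on R[i]),
     ab : F -> R   the modulus |.|,
     re : F -> R   the real part. *)

Definition nrm2sq (R : realType) (F : numFieldType) (ab : F -> R) (k : nat)
  (v : 'cV[F]_k) : R := \sum_(i < k) ab (v i 0) ^+ 2.
Definition nrm2 (R : realType) (F : numFieldType) (ab : F -> R) (k : nat)
  (v : 'cV[F]_k) : R := Num.sqrt (nrm2sq ab v).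

Definition adj (F : numFieldType) (cj : F -> F) (m n : nat) (A : 'M[F]_(m, n))
  : 'M[F]_(n, m) := map_mx cj A^T.

Definition col_norm_inf (R : realType) (F : numFieldType) (ab : F -> R)
  (m n : nat) (A : 'M[F]_(m, n)) : R :=
  \big[Num.max/0]_(j < n) nrm2 ab (col j A).

Definition card (F : numFieldType) (n : nat) (x : 'cV[F]_n) : nat :=
  #|[set i : 'I_n | x i 0 != 0]|.

Definition beta (R : realType) (F : numFieldType) (ab : F -> R) (m n : nat)
  (A : 'M[F]_(m, n)) (k : nat) : R :=
  inf [set r : R | exists x : 'cV[F]_n,
         [/\ x != 0, (card x <= k)%N & r = nrm2 ab (A *m x) / nrm2 ab x]].

Definition Kfun (R : realType) (F : numFieldType) (ab : F -> R) (m n : nat)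
  (mu : R) (A : 'M[F]_(m, n)) (b : 'cV[F]_m) (x : 'cV[F]_n) : R :=
  mu * (card x)%:R + nrm2 ab (A *m x - b) ^+ 2.

Definition Q2card (R : realType) (F : numFieldType) (ab : F -> R) (n : nat)
  (mu : R) (x : 'cV[F]_n) : R :=
  \sum_(j < n) (mu - (Num.max (Num.sqrt mu - ab (x j 0)) 0) ^+ 2).

Definition Kreg (R : realType) (F : numFieldType) (ab : F -> R) (m n : nat)
  (mu : R) (A : 'M[F]_(m, n)) (b : 'cV[F]_m) (x : 'cV[F]_n) : R :=
  Q2card ab mu x + nrm2 ab (A *m x - b) ^+ 2.

Definition inner_re (R : realType) (F : numFieldType) (cj : F -> F)
  (re : F -> R) (n : nat) (v w : 'cV[F]_n) : R :=
  \sum_(i < n) re (v i 0 * cj (w i 0)).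

(* Frechet subdifferential: v such that
   liminf_{y -> x, y <> x} (g y - g x - Re<v, y - x>) / ||y - x|| >= 0,
   written out with epsilon/delta. *)
Definition frechet_subdiff (R : realType) (F : numFieldType) (cj : F -> F)
  (ab : F -> R) (re : F -> R) (n : nat) (g : 'cV[F]_n -> R) (x : 'cV[F]_n)
  : set 'cV[F]_n :=
  [set v | forall eps : R, 0 < eps -> exists2 delta : R, 0 < delta &
      forall y : 'cV[F]_n, 0 < nrm2 ab (y - x) < delta ->
        - eps * nrm2 ab (y - x) <= g y - g x - inner_re cj re v (y - x)].

Definition stationary (R : realType) (F : numFieldType) (cj : F -> F)
  (ab : F -> R) (re : F -> R) (n : nat) (g : 'cV[F]_n -> R) (x : 'cV[F]_n)
  : Prop := frechet_subdiff cj ab re g x 0.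

Definition unique_global_minimizer (R : realType) (F : numFieldType) (n : nat)
  (g : 'cV[F]_n -> R) (x : 'cV[F]_n) : Prop :=
  forall y : 'cV[F]_n, y != x -> g x < g y.

Definition theorem4p5_claim (R : realType) (F : numFieldType) (cj : F -> F)
  (ab : F -> R) (re : F -> R) : Prop :=
  forall (m n : nat) (A : 'M[F]_(m, n)) (b : 'cV[F]_m) (mu : R) (N : nat)
         (x' : 'cV[F]_n),
    col_norm_inf ab A <= 1 ->
    0 < mu ->
    (1 <= N)%N ->
    0 < beta ab A N ->
    stationary cj ab re (Kreg ab mu A b) x' ->
    (forall z' : 'cV[F]_n,
       z' = (1%:M - adj cj A *m A) *m x' + adj cj A *m b ->
       forall i : 'I_n,
         ~ (beta ab A N ^+ 2 * Num.sqrt mu <= ab (z' i 0)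
              <= Num.sqrt mu / beta ab A N ^+ 2)) ->
    2 * mu * (card x')%:R + nrm2 ab (A *m x' - b) ^+ 2 < mu * N%:R + mu ->
    unique_global_minimizer (Kfun ab mu A b) x' /\
    unique_global_minimizer (Kreg ab mu A b) x'.

(* Main.v *)
Require Import Defs.
From HB Require Import structures.
From mathcomp Require Import all_boot all_order all_algebra.
From mathcomp Require Import classical_sets reals.
From mathcomp.real_closed Require Import complex.
From mathcomp Require Import ring lra.
Import Order.TTheory GRing.Theory Num.Theory.
Local Open Scope ring_scope.
Section Generic.
Variables (R : realType) (F : numFieldType) (cj : F -> F) (ab : F -> R)
  (re : F -> R) (emb : R -> F).
Hypotheses (cjD : forall x y, cj (x + y) = cj x + cj y)
  (cjM : forall x y, cj (x * y) = cj x * cj y)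
  (cjK : forall x, cj (cj x) = x)
  (cj_emb : forall a, cj (emb a) = emb a)
  (reD : forall x y, re (x + y) = re x + re y)
  (re_emb : forall a x, re (emb a * x) = a * re x)
  (re_cj : forall x, re (cj x) = re x)
  (re_nrm : forall x, re (x * cj x) = ab x ^+ 2)
  (re_le : forall x, re x <= ab x)
  (abM : forall x y, ab (x * y) = ab x * ab y)
  (ab_cj : forall x, ab (cj x) = ab x)
  (ab_emb : forall a, ab (emb a) = `|a|)
  (ab_ge0 : forall x, 0 <= ab x)
  (ab_eq0 : forall x, ab x = 0 -> x = 0)
  (embD : forall a b, emb (a + b) = emb a + emb b)
  (embM : forall a b, emb (a * b) = emb a * emb b)
  (emb1 : emb 1 = 1).

Lemma re0 : re 0 = 0.
Proof. by apply: (addrI (re 0)); rewrite -reD !addr0. Qed.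
Lemma reN x : re (- x) = - re x.
Proof. by apply/eqP; rewrite -subr_eq0 opprK addrC -reD subrr re0. Qed.
Lemma re_sum (I : finType) (f : I -> F) : re (\sum_i f i) = \sum_i re (f i).
Proof. by apply: (big_morph _ reD re0). Qed.
Lemma cj0 : cj 0 = 0.
Proof. by apply: (addrI (cj 0)); rewrite -cjD !addr0. Qed.
Lemma cj_sum (I : finType) (f : I -> F) : cj (\sum_i f i) = \sum_i cj (f i).
Proof. by apply: (big_morph _ cjD cj0). Qed.
Lemma emb0 : emb 0 = 0.
Proof. by apply: (addrI (emb 0)); rewrite -embD !addr0. Qed.
Lemma embN a : emb (- a) = - emb a.
Proof. by apply/eqP; rewrite -subr_eq0 opprK addrC -embD subrr emb0. Qed.
Lemma ab0 : ab 0 = 0.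
Proof. by have := re_nrm 0; rewrite mul0r re0 => /esym/eqP; rewrite sqrf_eq0 => /eqP. Qed.
Lemma abN x : ab (- x) = ab x.
Proof. by rewrite -mulN1r -emb1 -embN abM ab_emb normrN normr1 mul1r. Qed.
Lemma ab_gt0 x : x != 0 -> 0 < ab x.
Proof. by move=> hx; rewrite lt_def ab_ge0 andbT; apply/eqP => /ab_eq0 /eqP; rewrite (negbTE hx). Qed.
Lemma ab_embM a x : ab (emb a * x) = `|a| * ab x.
Proof. by rewrite abM ab_emb. Qed.
Lemma re_swap x y : re (x * cj y) = re (y * cj x).
Proof. by rewrite -re_cj cjM cjK mulrC. Qed.
Lemma re_mul_le x y : re (x * cj y) <= ab x * ab y.
Proof. by rewrite -(ab_cj y) -abM re_le. Qed.
Lemma re_mul_ge x y : - (ab x * ab y) <= re (x * cj y).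
Proof. by rewrite lerNl -reN -mulNr -(abN x) re_mul_le. Qed.
Lemma abD2 x y : ab (x + y) ^+ 2 = ab x ^+ 2 + 2 * re (x * cj y) + ab y ^+ 2.
Proof.
rewrite -re_nrm cjD mulrDl !mulrDr !reD !re_nrm (re_swap y x); ring.
Qed.
Lemma re_embr a x y : re (x * cj (emb a * y)) = a * re (x * cj y).
Proof. by rewrite cjM cj_emb mulrCA re_emb. Qed.


Local Notation nsq := (nrm2sq ab).
Local Notation ip := (inner_re cj re).

Lemma nsq_ge0 k (v : 'cV[F]_k) : 0 <= nsq v.
Proof. by apply: sumr_ge0 => i _; rewrite exprn_ge0. Qed.

Lemma nsq_eq0 k (v : 'cV[F]_k) : nsq v = 0 -> v = 0.
Proof.
move=> h; apply/matrixP => i l; rewrite ord1 mxE.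
have := psumr_eq0P (fun i _ => exprn_ge0 2 (ab_ge0 (v i 0))) h (i:=i) isT.
by move/eqP; rewrite sqrf_eq0 => /eqP /ab_eq0.
Qed.

Lemma nsq_gt0 k (v : 'cV[F]_k) : v != 0 -> 0 < nsq v.
Proof.
move=> hv; rewrite lt_def nsq_ge0 andbT; apply/eqP => /nsq_eq0 h.
by rewrite h eqxx in hv.
Qed.

Lemma nrm2_sq k (v : 'cV[F]_k) : nrm2 ab v ^+ 2 = nsq v.
Proof. by rewrite sqr_sqrtr // nsq_ge0. Qed.

Lemma nrm2_ge0 k (v : 'cV[F]_k) : 0 <= nrm2 ab v.
Proof. exact: sqrtr_ge0. Qed.

Lemma nsqD k (v w : 'cV[F]_k) : nsq (v + w) = nsq v + 2 * ip v w + nsq w.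
Proof.
rewrite /nrm2sq /inner_re; under eq_bigr do rewrite mxE abD2.
by rewrite !big_split /= -mulr_sumr.
Qed.

Lemma nsqZF k c (v : 'cV[F]_k) : nsq (c *: v) = ab c ^+ 2 * nsq v.
Proof.
rewrite /nrm2sq mulr_sumr; apply: eq_bigr => i _.
by rewrite mxE abM exprMn.
Qed.

Lemma nsqZ k s (v : 'cV[F]_k) : nsq (emb s *: v) = s ^+ 2 * nsq v.
Proof. by rewrite nsqZF ab_emb real_normK // num_real. Qed.

Lemma ipZl k s (v w : 'cV[F]_k) : ip (emb s *: v) w = s * ip v w.
Proof.
rewrite /inner_re mulr_sumr; apply: eq_bigr => i _.
by rewrite mxE -mulrA re_emb.
Qed.

Lemma ip0l k (w : 'cV[F]_k) : ip 0 w = 0.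
Proof. by rewrite /inner_re big1 // => i _; rewrite mxE mul0r re0. Qed.

Lemma ip_adj m n (A : 'M[F]_(m, n)) (d : 'cV[F]_n) (r : 'cV[F]_m) :
  ip (A *m d) r = ip d (adj cj A *m r).
Proof.
rewrite /inner_re.
under eq_bigr do rewrite mxE mulr_suml re_sum.
under [RHS]eq_bigr do rewrite mxE cj_sum mulr_sumr re_sum.
rewrite exchange_big /=; apply: eq_bigr => k _; apply: eq_bigr => i _.
by rewrite /adj !mxE cjM cjK mulrCA mulrA.
Qed.

Lemma expand m n (A : 'M[F]_(m, n)) (b : 'cV[F]_m) (v e : 'cV[F]_n) s :
  nsq (A *m (v + emb s *: e) - b) =
  nsq (A *m v - b) + 2 * s * ip (A *m e) (A *m v - b) + s ^+ 2 * nsq (A *m e).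
Proof.
have -> : A *m (v + emb s *: e) - b = emb s *: (A *m e) + (A *m v - b).
  by rewrite mulmxDr scalemxAr addrAC addrC.
rewrite nsqD ipZl nsqZ; ring.
Qed.

Definition ev {n} (j : 'I_n) (u : F) : 'cV[F]_n := \col_i (if i == j then u else 0).

Lemma evE n (j i : 'I_n) u : ev j u i 0 = if i == j then u else 0.
Proof. by rewrite mxE. Qed.

Lemma ev_scale n (j : 'I_n) c u : c *: ev j u = ev j (c * u).
Proof.
apply/matrixP => i l; rewrite !mxE; by case: eqP => _; rewrite ?mulr0.
Qed.

Lemma nsq_ev n (j : 'I_n) u : nsq (ev j u) = ab u ^+ 2.
Proof.
rewrite /nrm2sq (bigD1 j) //= big1 ?addr0 => [|i /negbTE hi]; rewrite mxE.
  by rewrite eqxx.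
by rewrite hi ab0 expr0n.
Qed.

Lemma ip_ev n (j : 'I_n) u w : ip (ev j u) w = re (u * cj (w j 0)).
Proof.
rewrite /inner_re (bigD1 j) //= big1 ?addr0 => [|i /negbTE hi]; rewrite mxE.
  by rewrite eqxx.
by rewrite hi mul0r re0.
Qed.

Lemma card_ev n (j : 'I_n) u : u != 0 -> Defs.card (ev j u) = 1%N.
Proof.
move=> hu; rewrite /Defs.card -[RHS](cards1 j); apply: eq_card => i.
by rewrite !inE mxE; case: (i == j) => //; rewrite eqxx.
Qed.

Lemma mul_ev m n (A : 'M[F]_(m, n)) (j : 'I_n) u : A *m ev j u = u *: col j A.
Proof.
apply/matrixP => i l; rewrite !mxE (bigD1 j) //= big1 ?addr0 => [|k /negbTE hk].
  by rewrite mxE eqxx mulrC.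
by rewrite mxE hk mulr0.
Qed.

Lemma nsq_col_le m n (A : 'M[F]_(m, n)) (j : 'I_n) :
  col_norm_inf ab A <= 1 -> nsq (col j A) <= 1.
Proof.
move=> h; rewrite -nrm2_sq.
have h1 : nrm2 ab (col j A) <= 1.
  apply: le_trans h; exact: (le_bigmax 0 (fun j => nrm2 ab (col j A)) j).
have h0 := @nrm2_ge0 _ (col j A); nra.
Qed.


Lemma ab1 : ab 1 = 1.
Proof. by rewrite -emb1 ab_emb normr1. Qed.

Lemma nsq0 k : nsq (0 : 'cV[F]_k) = 0.
Proof. by rewrite /nrm2sq big1 // => i _; rewrite mxE ab0 expr0n. Qed.

Definition qf (mu t : R) : R := mu - (Num.max (Num.sqrt mu - t) 0) ^+ 2.

Section Q.
Variable mu : R.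
Hypothesis mu_gt0 : 0 < mu.
Let s := Num.sqrt mu.
Lemma s_gt0 : 0 < s. Proof. by rewrite sqrtr_gt0. Qed.
Lemma s_sq : s ^+ 2 = mu. Proof. by rewrite sqr_sqrtr // ltW. Qed.

Lemma q_small t : t <= s -> qf mu t = 2 * s * t - t ^+ 2.
Proof.
move=> h; rewrite /qf max_l; last by rewrite subr_ge0.
have := s_sq; rewrite /s; nra.
Qed.

Lemma q_big t : s <= t -> qf mu t = mu.
Proof.
move=> h; rewrite /qf max_r; last by rewrite subr_le0.
by rewrite expr0n subr0.
Qed.

Lemma q0 : qf mu 0 = 0.
Proof. by rewrite q_small ?(ltW s_gt0) //; rewrite expr0n mulr0 subr0. Qed.

Lemma q_le_lin t : 0 <= t -> qf mu t <= 2 * s * t.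
Proof.
move=> t0; have hs := s_gt0; have hs2 := s_sq.
have [h|h] := leP t s.
  by rewrite q_small //; nra.
rewrite q_big; last exact: ltW.
nra.
Qed.

Lemma q_tan t t0 : 0 <= t -> 0 <= t0 ->
  qf mu t <= qf mu t0 + 2 * Num.max (s - t0) 0 * (t - t0).
Proof.
move=> ht ht0; have hs := s_gt0; have hs2 := s_sq.
have [h0|h0] := leP t0 s.
  rewrite max_l; last by rewrite subr_ge0.
  rewrite (q_small _ h0).
  have hsq := sqr_ge0 (t - t0).
  have [h|h] := leP t s.
    by rewrite q_small //; nra.
  by rewrite q_big; [nra|exact: ltW].
rewrite max_r; last by rewrite subr_le0 ltW.
rewrite mulr0 mul0r addr0 (q_big t0); last exact: ltW.
have [h|h] := leP t s.
  by rewrite q_small //; nra.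
by rewrite q_big //; exact: ltW.
Qed.
End Q.

Lemma Q2_upd mu n (x : 'cV[F]_n) (j : 'I_n) u :
  Q2card ab mu (x + ev j u) =
  Q2card ab mu x - qf mu (ab (x j 0)) + qf mu (ab (x j 0 + u)).
Proof.
rewrite /Q2card (bigD1 j) //= [in RHS](bigD1 j) //= !mxE eqxx.
have -> : \sum_(i < n | i != j)
   (mu - Num.max (Num.sqrt mu - ab ((x + ev j u) i 0)) 0 ^+ 2) =
   \sum_(i < n | i != j) (mu - Num.max (Num.sqrt mu - ab (x i 0)) 0 ^+ 2).
  by apply: eq_bigr => i /negbTE hi; rewrite !mxE hi addr0.
rewrite /qf; ring.
Qed.

Lemma cardE n (x : 'cV[F]_n) :
  (Defs.card x)%:R = \sum_j ((x j 0 != 0)%:R : R).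
Proof.
rewrite /Defs.card -sum1_card natr_sum big_mkcond /=.
by apply: eq_bigr => i _; rewrite inE; case: ifP.
Qed.

Lemma Q2_card mu n (x : 'cV[F]_n) : 0 < mu ->
  (forall j, x j 0 = 0 \/ Num.sqrt mu <= ab (x j 0)) ->
  Q2card ab mu x = mu * (Defs.card x)%:R.
Proof.
move=> hmu h; rewrite cardE mulr_sumr; apply: eq_bigr => j _; rewrite -/(qf mu (ab (x j 0))).
case: (h j) => [->|hj].
  by rewrite eqxx /= mulr0 ab0; exact: (q0 _ hmu).
rewrite q_big //.
case: eqP => [e|_]; last by rewrite mulr1.
by move: hj; rewrite e ab0 leNgt sqrtr_gt0 hmu.
Qed.

Lemma beta_sq m n (A : 'M[F]_(m, n)) N (x : 'cV[F]_n) :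
  0 <= beta ab A N -> (Defs.card x <= N)%N ->
  beta ab A N ^+ 2 * nsq x <= nsq (A *m x).
Proof.
move=> hb hc; have [->|hx] := eqVneq x 0.
  by rewrite nsq0 mulr0 nsq_ge0.
have hE : beta ab A N <= nrm2 ab (A *m x) / nrm2 ab x.
  apply: ge_inf.
    exists 0 => r [y [_ _ ->]]; apply: divr_ge0; exact: nrm2_ge0.
  by exists x; split.
have hc0 : 0 < nrm2 ab x by rewrite sqrtr_gt0 nsq_gt0.
move: hE; rewrite ler_pdivlMr // => hE.
rewrite -!nrm2_sq; have h1 : 0 <= beta ab A N * nrm2 ab x by rewrite mulr_ge0 // ltW.
have := ler_pM h1 h1 hE hE; nra.
Qed.

Lemma beta_le1 m n (A : 'M[F]_(m, n)) N (j : 'I_n) :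
  col_norm_inf ab A <= 1 -> (1 <= N)%N -> 0 <= beta ab A N ->
  beta ab A N <= 1.
Proof.
move=> hA hN hb.
have := @beta_sq _ _ A N (ev j 1) hb (leq_trans (eq_leq (@card_ev _ j 1 (oner_neq0 F))) hN).
rewrite nsq_ev ab1 expr1n mulr1 mul_ev scale1r => h.
have := @nsq_col_le _ _ A j hA; nra.
Qed.


Lemma real_lemma (L M k : R) : 0 < k ->
  (forall eps, 0 < eps -> exists2 d, 0 < d &
     forall sg, 0 < sg -> sg * k < d -> - eps * (sg * k) <= sg * L + sg ^+ 2 * M) ->
  0 <= L.
Proof.
move=> hk H; rewrite leNgt; apply/negP => hL.
have he : 0 < - L / (2 * k) by rewrite divr_gt0 // ?oppr_gt0 // mulr_gt0.
have [d hd Hd] := H _ he.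
have hM1 : 0 < 2 * (`|M| + 1) by rewrite mulr_gt0 // ltr_wpDl.
set sg := Num.min (d / (2 * k)) (- L / (2 * (`|M| + 1))).
have hk2 : 0 < 2 * k by rewrite mulr_gt0.
have hsg : 0 < sg.
  by rewrite lt_min; apply/andP; split; apply: divr_gt0 => //; rewrite oppr_gt0.
have h1 : sg <= d / (2 * k) by rewrite ge_min lexx.
have h2 : sg <= - L / (2 * (`|M| + 1)) by rewrite ge_min lexx orbT.
move: h1 h2; rewrite !ler_pdivlMr // => h1 h2.
have hlt : sg * k < d by nra.
have := Hd sg hsg hlt.
have -> : - (- L / (2 * k)) * (sg * k) = L * sg / 2.
  by field; rewrite gt_eqF.
have hMn := ler_norm M.
move=> h.
have h3 : 0 <= sg * (L / 2 + sg * M) by nra.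
have h4 : 0 <= L / 2 + sg * M.
  by move: h3; rewrite pmulr_rge0.
nra.
Qed.

Section Main.
Variables (m n : nat) (A : 'M[F]_(m, n)) (b : 'cV[F]_m) (mu : R) (N : nat)
  (x : 'cV[F]_n).
Hypotheses (hA : col_norm_inf ab A <= 1) (hmu : 0 < mu) (hN : (1 <= N)%N)
  (hb : 0 < beta ab A N)
  (hst : stationary cj ab re (Kreg ab mu A b) x)
  (hz : forall i : 'I_n,
     ~ (beta ab A N ^+ 2 * Num.sqrt mu
        <= ab (((1%:M - adj cj A *m A) *m x + adj cj A *m b) i 0)
        <= Num.sqrt mu / beta ab A N ^+ 2)).

Local Notation bt := (beta ab A N).
Local Notation s := (Num.sqrt mu).
Local Notation g := (adj cj A *m (A *m x - b)).

Lemma z_eq : (1%:M - adj cj A *m A) *m x + adj cj A *m b = x - g.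
Proof.
by rewrite mulmxBl mul1mx mulmxBr mulmxA opprB addrA addrAC.
Qed.

Lemma Kreg_upd (y : 'cV[F]_n) (j : 'I_n) u :
  Kreg ab mu A b (y + ev j u) =
  Q2card ab mu y - qf mu (ab (y j 0)) + qf mu (ab (y j 0 + u))
  + nsq (A *m y - b) + 2 * ip (ev j u) (adj cj A *m (A *m y - b))
  + nsq (A *m ev j u).
Proof.
rewrite /Kreg nrm2_sq Q2_upd.
have -> : y + ev j u = y + emb 1 *: ev j u by rewrite emb1 scale1r.
rewrite expand ip_adj; ring.
Qed.

Lemma Kreg_dir (j : 'I_n) w sg :
  Kreg ab mu A b (x + ev j (emb sg * w)) - Kreg ab mu A b x =
  qf mu (ab (x j 0 + emb sg * w)) - qf mu (ab (x j 0))
  + 2 * sg * re (w * cj (g j 0)) + sg ^+ 2 * (ab w ^+ 2 * nsq (col j A)).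
Proof.
rewrite Kreg_upd ip_ev -mulrA re_emb mul_ev nsqZF abM ab_emb exprMn real_normK ?num_real //.
rewrite /Kreg nrm2_sq; ring.
Qed.

Lemma frechet_dir (j : 'I_n) (w : F) (L M : R) : w != 0 ->
  (forall sg, 0 < sg ->
     Kreg ab mu A b (x + ev j (emb sg * w)) - Kreg ab mu A b x <= sg * L + sg ^+ 2 * M) ->
  0 <= L.
Proof.
move=> hw Hup; apply: (@real_lemma L M (ab w)); first exact: ab_gt0.
move=> eps he; have [d hd H] := hst eps he.
exists d => // sg hsg hsgk.
have nrmE : nrm2 ab (x + ev j (emb sg * w) - x) = sg * ab w.
  rewrite addrC addKr /nrm2 nsq_ev abM ab_emb sqrtr_sqr ger0_norm.
    by rewrite ger0_norm // ltW.
  by rewrite mulr_ge0.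
have := H (x + ev j (emb sg * w)); rewrite nrmE ip0l subr0 => H'.
apply: le_trans (H' _) (Hup sg hsg).
by rewrite hsgk andbT mulr_gt0 // ab_gt0.
Qed.


Lemma bt_le1 (j : 'I_n) : bt <= 1.
Proof. exact: (@beta_le1 _ _ A N j hA hN (ltW hb)). Qed.

Lemma s_pos : 0 < s. Proof. by rewrite sqrtr_gt0. Qed.

Lemma s_le_div (j : 'I_n) : s <= s / bt ^+ 2.
Proof.
have hb2 : 0 < bt ^+ 2 by rewrite exprn_gt0.
rewrite ler_pdivlMr //.
have hs := s_pos; have h1 := bt_le1 j.
have h2 : bt ^+ 2 <= 1 by rewrite exprn_ile1 // ltW.
nra.
Qed.

Lemma stat0 (j : 'I_n) : x j 0 = 0 -> ab (g j 0) <= s.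
Proof.
move=> hx; set G := g j 0.
have [->|hG] := eqVneq G 0; first by rewrite ab0 sqrtr_ge0.
have hw : - G != 0 by rewrite oppr_eq0.
have hs := s_pos.
have hG0 := ab_gt0 _ hG.
have := @frechet_dir j (- G) (2 * s * ab G + 2 * re (- G * cj G))
  (ab G ^+ 2 * nsq (col j A)) hw.
rewrite mulNr reN re_nrm => H.
suff : 0 <= 2 * s * ab G + 2 * - ab G ^+ 2 by nra.
apply: H => sg hsg.
rewrite Kreg_dir hx add0r ab0 (q0 _ hmu) subr0 abM ab_emb abN ger0_norm ?(ltW hsg) //.
rewrite mulNr reN re_nrm.
have := q_le_lin _ hmu _ (mulr_ge0 (ltW hsg) (ab_ge0 G)).
nra.
Qed.


Lemma stat1 (j : 'I_n) : x j 0 != 0 ->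
  emb (Num.max (s - ab (x j 0)) 0 / ab (x j 0)) * x j 0 + g j 0 = 0.
Proof.
move=> hx; set G := g j 0; set t0 := ab (x j 0).
set a := Num.max (s - t0) 0; set c := a / t0.
set v := emb c * x j 0 + G.
have [//|hv] := eqVneq v 0; exfalso.
have ht0 : 0 < t0 := ab_gt0 _ hx.
have ha : 0 <= a by rewrite le_max lexx orbT.
have hc : 0 <= c by rewrite divr_ge0 // ltW.
have hac : a = c * t0 by rewrite /c divfK // gt_eqF.
set w := - v.
have hw : w != 0 by rewrite oppr_eq0.
have hv0 := ab_gt0 _ hv.
set R1 := re (x j 0 * cj w).
have := @frechet_dir j w (2 * c * R1 + 2 * re (w * cj G))
  (c * ab w ^+ 2 + ab w ^+ 2 * nsq (col j A)) hw.
have hL : 2 * c * R1 + 2 * re (w * cj G) = - 2 * ab v ^+ 2.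
  rewrite /R1 re_swap.
  have -> : - 2 * ab v ^+ 2 = 2 * re (w * cj v) by rewrite /w [in RHS]mulNr reN re_nrm; ring.
  by rewrite /v cjD mulrDr reD re_embr; ring.
rewrite hL => H.
suff : 0 <= - 2 * ab v ^+ 2 by nra.
apply: H => sg hsg.
rewrite Kreg_dir.
set t := ab (x j 0 + emb sg * w).
have ht : 0 <= t := ab_ge0 _.
have H1 := q_tan mu hmu _ _ (ab_ge0 (x j 0 + emb sg * w)) (ab_ge0 (x j 0)).
have H2 : t ^+ 2 = t0 ^+ 2 + 2 * (sg * R1) + sg ^+ 2 * ab w ^+ 2.
  rewrite /t abD2 re_embr abM ab_emb ger0_norm ?(ltW hsg) // /t0 /R1; ring.
have H3 : 2 * t0 * (t - t0) <= 2 * (sg * R1) + sg ^+ 2 * ab w ^+ 2.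
  have := sqr_ge0 (t - t0); nra.
have H4 := ler_wpM2l hc H3.
rewrite -/t0 in H1 *; rewrite -/a -/t in H1.
rewrite hac in H1.
nra.
Qed.

Lemma zE (j : 'I_n) :
  ((1%:M - adj cj A *m A) *m x + adj cj A *m b) j 0 = x j 0 - g j 0.
Proof. by rewrite z_eq !mxE. Qed.

Lemma stat_zero (j : 'I_n) : x j 0 = 0 -> ab (g j 0) < bt ^+ 2 * s.
Proof.
move=> hx; have := hz j; rewrite zE hx sub0r abN => hz'.
have h := stat0 j hx.
rewrite ltNge; apply/negP => hge; apply: hz'; rewrite hge /=.
exact: le_trans h (s_le_div j).
Qed.

Lemma stat_nz (j : 'I_n) : x j 0 != 0 -> g j 0 = 0 /\ s / bt ^+ 2 < ab (x j 0).
Proof.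
move=> hx; have := hz j; rewrite zE => hz'.
have hv := stat1 j hx.
set t0 := ab (x j 0) in hv hz' *.
set a := Num.max (s - t0) 0 in hv.
have ht0 : 0 < t0 := ab_gt0 _ hx.
have hG : g j 0 = - (emb (a / t0) * x j 0).
  by apply/eqP; rewrite -addr_eq0 addrC hv.
have hs := s_pos; have h1 := bt_le1 j; have hsd := s_le_div j.
have hb2 : bt ^+ 2 * s <= s.
  have h2 : bt ^+ 2 <= 1 by rewrite exprn_ile1 // ltW.
  nra.
rewrite hG opprK in hz'.
have hz2 : x j 0 + emb (a / t0) * x j 0 = emb (1 + a / t0) * x j 0.
  by rewrite embD emb1 mulrDl mul1r.
rewrite hz2 abM ab_emb ger0_norm in hz'; last first.
  by rewrite addr_ge0 // divr_ge0 // ?le_max ?lexx ?orbT // ltW.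
have [hlt|hge] := ltP t0 s.
  exfalso; apply: hz'.
  rewrite /a max_l; last by rewrite subr_ge0 ltW.
  have -> : (1 + (s - t0) / t0) * t0 = s by field; rewrite gt_eqF.
  by rewrite hb2 hsd.
have ha : a = 0 by rewrite /a max_r // subr_le0.
rewrite ha mul0r addr0 mul1r in hz'.
rewrite ha mul0r emb0 mul0r oppr0 in hG.
split => //.
rewrite ltNge; apply/negP => hle; apply: hz'.
by rewrite hle andbT (le_trans hb2 hge).
Qed.


Lemma s_sq' : s ^+ 2 = mu. Proof. by rewrite sqr_sqrtr // ltW. Qed.

Lemma Kx_eq : Kreg ab mu A b x = Kfun ab mu A b x.
Proof.
rewrite /Kreg /Kfun Q2_card //.
move=> j; have [->|hj] := eqVneq (x j 0) 0; first by left.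
right; have [_ h] := stat_nz j hj.
exact: ltW (le_lt_trans (s_le_div j) h).
Qed.

Lemma card_sub (y : 'cV[F]_n) :
  (Defs.card (y - x) <= Defs.card y + Defs.card x)%N.
Proof.
rewrite /Defs.card.
have hsub : [set i | (y - x) i 0 != 0] \subset
   [set i | y i 0 != 0] :|: [set i | x i 0 != 0].
  apply/fintype.subsetP => i; rewrite !inE !mxE.
  apply: contraR; rewrite negb_or !negbK => /andP [/eqP -> /eqP ->].
  by rewrite subrr.
exact: leq_trans (subset_leq_card hsub) (leq_card_setU _ _).
Qed.

Lemma nb_t : ((~~ true)%:R : R) = 0. Proof. by []. Qed.
Lemma nb_f : ((~~ false)%:R : R) = 1. Proof. by []. Qed.

Definition phiv (y : 'cV[F]_n) (j : 'I_n) : R :=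
  mu * ((y j 0 != 0)%:R - (x j 0 != 0)%:R)
     + 2 * re ((y - x) j 0 * cj (g j 0)) + bt ^+ 2 * ab ((y - x) j 0) ^+ 2.

Lemma phi_pos (y : 'cV[F]_n) (j : 'I_n) :
  0 <= phiv y j /\ ((y - x) j 0 != 0 -> 0 < phiv y j).
Proof.
have hd : (y - x) j 0 = y j 0 - x j 0 by rewrite !mxE.
rewrite /phiv hd.
have hs := s_pos; have h1 := bt_le1 j; have hs2 := s_sq'.
have hb2 : 0 < bt ^+ 2 by rewrite exprn_gt0.
have hb21 : bt ^+ 2 <= 1 by rewrite exprn_ile1 // ltW.
have [hx|hx] := eqVneq (x j 0) 0.
  rewrite hx subr0 /= subr0.
  have hh := stat_zero j hx.
  have [->|hy] := eqVneq (y j 0) 0.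
    by rewrite /= mulr0 mul0r re0 mulr0 ab0 expr0n /= mulr0 !addr0; split.
  rewrite /= mulr1.
  have hu := ab_gt0 _ hy.
  have hr := re_mul_ge (y j 0) (g j 0).
  have e1 : ab (y j 0) * ab (g j 0) < ab (y j 0) * (bt ^+ 2 * s) by rewrite ltr_pM2l.
  have e2 := mulr_ge0 (ltW hb2) (sqr_ge0 (ab (y j 0) - s)).
  have e3 : 0 <= (1 - bt ^+ 2) * s ^+ 2.
    by apply: mulr_ge0; [rewrite subr_ge0 | exact: sqr_ge0].
  suff : 0 < mu + 2 * re (y j 0 * cj (g j 0)) + bt ^+ 2 * ab (y j 0) ^+ 2.
    by move=> h; split => //; exact: ltW.
  nra.
have [hg ht] := stat_nz j hx.
rewrite hg cj0 mulr0 re0 mulr0 addr0 /=.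
move: ht; rewrite ltr_pdivrMr // => ht.
have ht0 := ab_gt0 _ hx.
have [->|hy] := eqVneq (y j 0) 0.
  rewrite nb_t !sub0r abN.
  have e1 : s ^+ 2 < (ab (x j 0) * bt ^+ 2) ^+ 2.
    have := ltr_pM (ltW hs) (ltW hs) ht ht; nra.
  have e2 : (ab (x j 0) * bt ^+ 2) ^+ 2 <= bt ^+ 2 * ab (x j 0) ^+ 2.
    rewrite exprMn mulrC; apply: ler_wpM2r; first by rewrite exprn_ge0 // ltW.
    by rewrite expr2 ler_piMr // ltW.
  suff : 0 < mu * (- 1) + bt ^+ 2 * ab (x j 0) ^+ 2.
    by move=> h; split => //; exact: ltW.
  nra.
rewrite nb_f subrr mulr0 add0r.
split; first by rewrite mulr_ge0 // ?exprn_ge0 // ltW.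
move=> hdz; rewrite mulr_gt0 // exprn_gt0 //; exact: ab_gt0.
Qed.


Hypothesis hK :
  2 * mu * (Defs.card x)%:R + nrm2 ab (A *m x - b) ^+ 2 < mu * N%:R + mu.

Lemma KG (y : 'cV[F]_n) : y != x -> Kfun ab mu A b x < Kfun ab mu A b y.
Proof.
move=> hy; rewrite ltNge; apply/negP => hle.
set d := y - x.
have hyE : y = x + emb 1 *: d by rewrite emb1 scale1r /d addrC subrK.
have hexp : nsq (A *m y - b) = nsq (A *m x - b) + 2 * ip d g + nsq (A *m d).
  by rewrite {1}hyE expand ip_adj; ring.
move: hle hK; rewrite /Kfun !nrm2_sq => hle hK'.
have hcard : (Defs.card y + Defs.card x <= N)%N.
  have h : ((Defs.card y + Defs.card x)%:R : R) < (N + 1)%:R.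
    have hy0 := @nsq_ge0 _ (A *m y - b).
    have h' : mu * ((Defs.card y)%:R + (Defs.card x)%:R) < mu * (N%:R + 1) by lra.
    by rewrite ltr_pM2l // in h'; rewrite !natrD mulr1n.
  by rewrite ltr_nat addn1 ltnS in h.
have hcd : (Defs.card d <= N)%N := leq_trans (card_sub y) hcard.
have hbd := @beta_sq _ _ A N d (ltW hb) hcd.
have [j hj] : exists j, d j 0 != 0.
  case: (pickP (fun j => d j 0 != 0)) => [j hj|h0]; first by exists j.
  have hd0 : d = 0.
    apply/matrixP => i l; rewrite ord1.
    by move: (h0 i) => /= /negbFE /eqP ->; rewrite mxE.
  by move/eqP: hd0; rewrite subr_eq0 (negbTE hy).
have hsum : \sum_i phiv y i =
    mu * ((Defs.card y)%:R - (Defs.card x)%:R) + 2 * ip d g + bt ^+ 2 * nsq d.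
  rewrite !cardE /inner_re /nrm2sq -sumrB !mulr_sumr -!big_split /=.
  by apply: eq_bigr => i _; rewrite /phiv.
have hpos : 0 < \sum_i phiv y i.
  rewrite (bigD1 j) //=.
  have [_ h1] := phi_pos y j.
  have h2 : 0 <= \sum_(i < n | i != j) phiv y i.
    by apply: sumr_ge0 => i _; have [] := phi_pos y i.
  have := h1 hj; lra.
rewrite hexp in hle.
clear hyE.
lra.
Qed.

Lemma Kreg_x : forall y, y != x -> Kfun ab mu A b x < Kfun ab mu A b y.
Proof. exact: KG. Qed.


Lemma phi_form (y0 : 'cV[F]_n) (j : 'I_n) (u : F) (lam : R) :
  y0 j 0 = 0 -> 0 <= lam -> lam * ab u <= s ->
  Kreg ab mu A b (y0 + ev j (emb lam * u)) =
  Kreg ab mu A b y0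
  + lam * (2 * s * ab u + 2 * re (u * cj ((adj cj A *m (A *m y0 - b)) j 0)))
  + lam ^+ 2 * (ab u ^+ 2 * nsq (col j A) - ab u ^+ 2).
Proof.
move=> hy0 hl hls.
rewrite Kreg_upd hy0 ab0 (q0 _ hmu) subr0 add0r abM ab_emb ger0_norm //.
rewrite q_small //.
rewrite ip_ev -[emb lam * u * _]mulrA re_emb mul_ev nsqZF abM ab_emb ger0_norm //.
rewrite /Kreg nrm2_sq; ring.
Qed.

Definition badset (y : 'cV[F]_n) : {set 'I_n} :=
  [set i | (0 < ab (y i 0)) && (ab (y i 0) < s)].

Lemma Kfun_le_noBad (y : 'cV[F]_n) :
  (forall i, i \notin badset y) ->
  Kfun ab mu A b x <= Kreg ab mu A b y /\
  (Kreg ab mu A b y = Kfun ab mu A b x -> y = x).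
Proof.
move=> h0.
have -> : Kreg ab mu A b y = Kfun ab mu A b y.
  rewrite /Kreg /Kfun Q2_card // => i.
  have [->|hi] := eqVneq (y i 0) 0; first by left.
  right; move: (h0 i); rewrite inE (ab_gt0 _ hi) /= -leNgt; exact.
have [->|hy] := eqVneq y x; first by split.
have hlt := KG y hy; split; first exact: ltW.
by move=> e; move: hlt; rewrite e ltxx.
Qed.


Lemma addE (a c : 'cV[F]_n) i : (a + c) i 0 = a i 0 + c i 0.
Proof. by rewrite mxE. Qed.

Lemma KRG k : forall y : 'cV[F]_n, (#|badset y| <= k)%N ->
  Kfun ab mu A b x <= Kreg ab mu A b y /\
  (Kreg ab mu A b y = Kfun ab mu A b x -> y = x).
Proof.
elim: k => [|k IH] y hk.
  apply: Kfun_le_noBad => i; move: hk; rewrite leqn0 cards_eq0 => /eqP ->.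
  by rewrite inE.
case: (pickP (mem (badset y))) => [j hj|h0]; last first.
  by apply: Kfun_le_noBad => i; apply/negbT; apply: h0.
have hjb : j \in badset y by [].
move: (hjb); rewrite inE => /andP [ht0 hts].
set u := y j 0 in ht0 hts *; set t := ab u in ht0 hts *.
have hs := s_pos.
have hu : u != 0 by apply/eqP => e; move: ht0; rewrite /t e ab0 ltxx.
set y0 := y - ev j u.
have hy0j : y0 j 0 = 0 by rewrite !mxE eqxx subrr.
have hy0i : forall i, i != j -> y0 i 0 = y i 0.
  by move=> i hi; rewrite !mxE (negbTE hi) subr0.
have hyE : y = y0 + ev j (emb 1 * u) by rewrite emb1 mul1r /y0 subrK.
set l1 := s / t.
have hl1 : 1 < l1 by rewrite /l1 ltr_pdivlMr // mul1r.
have hl1t : l1 * t = s by rewrite /l1 divfK // gt_eqF.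
have hu1 : ab (emb l1 * u) = s.
  by rewrite abM ab_emb ger0_norm // ltW // (lt_trans ltr01 hl1).
set y1 := y0 + ev j (emb l1 * u).
have hbad : forall z : 'cV[F]_n, z j 0 = 0 \/ ab (z j 0) = s ->
    (forall i, i != j -> z i 0 = y i 0) -> (#|badset z| <= k)%N.
  move=> z hzj hzi.
  have hsub : badset z \subset badset y :\ j.
    apply/fintype.subsetP => i; rewrite !inE => /andP [h1 h2].
    have [e|hij] := eqVneq i j.
      rewrite e in h1 h2.
      by case: hzj => hzz; [rewrite hzz ab0 ltxx in h1 | rewrite hzz ltxx in h2].
    by rewrite -(hzi i hij) h1 h2.
  have := subset_leq_card hsub.
  move: hk; rewrite (cardsD1 j (badset y)) hjb add1n ltnS => hk.
  by move=> h; exact: leq_trans h hk.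
have [IH0a IH0b] := IH y0 (hbad y0 (or_introl hy0j) hy0i).
have hy1j : y1 j 0 = emb l1 * u by rewrite addE evE eqxx hy0j add0r.
have hy1i : forall i, i != j -> y1 i 0 = y i 0.
  by move=> i hi; rewrite addE evE (negbTE hi) addr0 hy0i.
have [IH1a _] := IH y1 (hbad y1 (or_intror (etrans (congr1 ab hy1j) hu1)) hy1i).
set P := 2 * s * t + 2 * re (u * cj ((adj cj A *m (A *m y0 - b)) j 0)).
set Q := t ^+ 2 * nsq (col j A) - t ^+ 2.
have e1 : Kreg ab mu A b y = Kreg ab mu A b y0 + 1 * P + 1 ^+ 2 * Q.
  by rewrite {1}hyE phi_form // mul1r ltW.
have e2 : Kreg ab mu A b y1 = Kreg ab mu A b y0 + l1 * P + l1 ^+ 2 * Q.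
  by rewrite /y1 phi_form // ?hl1t // ltW // (lt_trans ltr01 hl1).
have hC := @nsq_col_le _ _ A j hA.
have hQ : Q <= 0 by rewrite /Q subr_le0; have := sqr_ge0 t; nra.
have hprod : 0 <= Q * (l1 * (1 - l1)).
  by apply: mulr_le0 => //; nra.
set K := Kfun ab mu A b x in IH0a IH0b IH1a *.
have hl1' : 0 <= l1 - 1 by rewrite subr_ge0 ltW.
have hK0 : 0 <= Kreg ab mu A b y0 - K by rewrite subr_ge0.
have hm := mulr_ge0 hl1' hK0.
have hge : K <= Kreg ab mu A b y by nra.
split => // heq; exfalso.
have h0eq : Kreg ab mu A b y0 = K.
  by apply: le_anti; rewrite IH0a andbT; nra.
have hx0 := IH0b h0eq.
have hxj : x j 0 = 0 by rewrite -hx0.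
have hyx : y = x + ev j u by rewrite hyE emb1 mul1r hx0.
rewrite hyx Kreg_upd hxj ab0 (q0 _ hmu) subr0 add0r ip_ev -/t in heq.
rewrite q_small // in heq; last exact: ltW.
have hKx : K = Q2card ab mu x + nsq (A *m x - b) by rewrite /K -Kx_eq /Kreg nrm2_sq.
have hh := stat_zero j hxj.
have hr := re_mul_ge u (g j 0).
have hbe := @beta_sq _ _ A N (ev j u) (ltW hb)
  (leq_trans (eq_leq (@card_ev _ j u hu)) hN).
rewrite nsq_ev -/t in hbe.
have h1 := bt_le1 j.
have hb2 : bt ^+ 2 <= 1 by rewrite exprn_ile1 // ltW.
have e3 : t * ab (g j 0) < t * (bt ^+ 2 * s) by rewrite ltr_pM2l.
have e4 : 0 <= (1 - bt ^+ 2) * (t * (2 * s - t)).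
  apply: mulr_ge0; first by rewrite subr_ge0.
  apply: mulr_ge0; [exact: ltW | nra].
rewrite -/t in hr.
nra.
Qed.


End Main.

Lemma generic_claim : theorem4p5_claim cj ab re.
Proof.
move=> m n A b mu N x hA hmu hN hb hst hz hK.
have hz' := fun i => hz _ erefl i.
split.
  by move=> y hy; exact: (@KG m n A b mu N x hA hmu hN hb hst hz' hK y hy).
move=> y hy.
have hx : Kreg ab mu A b x = Kfun ab mu A b x.
  exact: (@Kx_eq m n A b mu N x hA hmu hN hb hst hz').
have [h1 h2] : Kfun ab mu A b x <= Kreg ab mu A b y /\
  (Kreg ab mu A b y = Kfun ab mu A b x -> y = x).
  exact: (@KRG m n A b mu N x hA hmu hN hb hst hz' hK _ y (leqnn _)).
rewrite hx lt_neqAle h1 andbT; apply/eqP => e.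
by move: hy; rewrite (h2 (esym e)) eqxx.
Qed.

End Generic.

Section RealInst.
Variable R : realType.

Lemma claim_real : theorem4p5_claim (F := R) id (fun x : R => `|x|) id.
Proof.
apply: (@generic_claim R R id (fun x : R => `|x|) id id) => //.
- by move=> x; rewrite /= real_normK ?num_real // expr2.
- by move=> x; exact: ler_norm.
- by move=> x y; rewrite normrM.
- by move=> x /eqP; rewrite normr_eq0 => /eqP.
Qed.
End RealInst.

Section ComplexInst.
Variable R : realType.
Local Open Scope complex_scope.

Lemma abC (z : R[i]) : complex.Re `|z| = Num.sqrt (complex.Re z ^+ 2 + complex.Im z ^+ 2).
Proof. by rewrite normc_def. Qed.

Lemma claim_complex : theorem4p5_claim (F := R[i]) (@conjc R)
  (fun z : R[i] => complex.Re `|z|) (@complex.Re R).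
Proof.
apply: (@generic_claim R R[i] (@conjc R) (fun z : R[i] => complex.Re `|z|)
  (@complex.Re R) (real_complex R)).
- by move=> x y; rewrite rmorphD.
- by move=> x y; rewrite rmorphM.
- exact: conjcK.
- exact: conjc_real.
- by move=> [a b] [c d].
- by move=> a [c d] /=; rewrite mul0r subr0.
- by move=> [a b].
- move=> [a b]; rewrite abC /= sqr_sqrtr ?addr_ge0 ?sqr_ge0 //.
  by rewrite mulrN opprK !expr2.
- move=> [a b]; rewrite abC /=.
  apply: le_trans (ler_norm a) _.
  rewrite -sqrtr_sqr ler_sqrt ?addr_ge0 ?sqr_ge0 //.
  by rewrite lerDl sqr_ge0.
- by move=> x y; rewrite normrM !normc_def /= mul0r subr0.
- by move=> [a b]; rewrite !abC /= sqrrN.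
- by move=> a; rewrite abC /= expr0n addr0 sqrtr_sqr.
- by move=> z; rewrite abC sqrtr_ge0.
- move=> z h; apply/eqP; rewrite -normr_eq0 normc_def -abC h.
  by [].
- by move=> a b; rewrite rmorphD.
- by rewrite rmorph1.
Qed.
End ComplexInst.

Theorem theorem4p5 (R : realType) :
  theorem4p5_claim (F := R) id (fun x : R => `|x|) id /\
  theorem4p5_claim (F := R[i]) (@conjc R) (fun z : R[i] => complex.Re `|z|)
    (@complex.Re R).
Proof. by split; [exact: claim_real | exact: claim_complex]. Qed.
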